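(* Let $\mathcal{C}$ be a combinatorial class with generating function $C(x)=\sum_{n\ge0}c_nx^n$, not reduced to its objects of size $0$, with radius of convergence $\rho>0$; let $C^\bullet(x)=xC'(x)$ and fix $x\in(0,\rho)$. Assume that for every $y\in(0,x]$ a Boltzmann sampler $\Gamma_y(\Theta\mathcal{C})$ with parameter $y$ for the pointed class $\Theta\mathcal{C}$ is available. Consider the procedure: draw $U\in[0,1]$ with density $u\mapsto \dfrac{C^\bullet(xu)}{u\,(C(x)-c_0)}$; independently, with probability $c_0/C(x)$ output a uniformly random object of size $0$ of $\mathcal{C}$, and otherwise run $\Gamma_{Ux}(\Theta\mathcal{C})$ and output the underlying object of $\mathcal{C}$ (forgetting the point). Then the output is distributed as a Boltzmann sampler for $\mathcal{C}$ with parameter $x$: each $a\in\mathcal{C}$ is output with probability $x^{|a|}/C(x)$. *)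

(* Defs.v *)
From Stdlib Require Import Bool Arith Reals Lra List.
Import ListNotations.
Open Scope R_scope.

Definition comb_class {A : Type} (size : A -> nat) (objs : nat -> list A) : Prop :=
  (forall n, NoDup (objs n)) /\ (forall n a, In a (objs n) <-> size a = n).

Definition cnt {A : Type} (objs : nat -> list A) (n : nat) : R :=
  INR (length (objs n)).

Definition series_converges (c : nat -> R) (y : R) : Prop :=
  exists l, infinite_sum (fun n => c n * y ^ n) l.

(** Radius of convergence of sum c_n y^n; [None] encodes +infinity. *)
Definition is_radius (c : nat -> R) (rho : option R) : Prop :=
  match rho with
  | Some r => (forall y, Rabs y < r -> series_converges c y) /\
              (forall y, r < Rabs y -> ~ series_converges c y)
  | None => forall y, series_converges c y
  end.

Definition radius_pos (rho : option R) : Prop :=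
  match rho with Some r => 0 < r | None => True end.

Definition lt_radius (x : R) (rho : option R) : Prop :=
  match rho with Some r => x < r | None => True end.

(** [G a i] = probability that the sampler outputs the pointed object (a,i)
    of the pointed class Theta C (i = the pointed atom, 1 <= i <= |a|).
    Boltzmann sampler for Theta C with parameter y, whose generating function
    is C^bullet(y) = y C'(y), given here as the value [Cb]. *)
Definition pointed_boltzmann {A : Type} (size : A -> nat) (Cby y : R)
    (G : A -> nat -> R) : Prop :=
  forall a i, G a i = if andb (Nat.leb 1 i) (Nat.leb i (size a))
                      then y ^ size a / Cby else 0.

Definition forget_point {A : Type} (size : A -> nat) (G : A -> nat -> R) (a : A) : R :=
  fold_right Rplus 0 (map (G a) (seq 1 (size a))).

Definition U_density (Cb : R -> R) (x c0 Cx : R) (u : R) : R :=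
  Cb (x * u) / (u * (Cx - c0)).

(** [procedure_prob ... a p]: the procedure outputs [a] with probability [p],
    computed by the law of total probability: size-0 branch with probability
    c0/C(x) (uniform among the c0 objects of size 0), otherwise run
    Gamma_{Ux}(Theta C) with U of density [U_density] and forget the point. *)
Definition procedure_prob {A : Type} (size : A -> nat) (objs : nat -> list A)
    (Cx : R) (Cb : R -> R) (G : R -> A -> nat -> R) (x : R) (a : A) (p : R) : Prop :=
  let c0 := cnt objs 0 in
  if Nat.eqb (size a) 0 then p = (c0 / Cx) * (1 / c0)
  else exists pr : Riemann_integrable
                     (fun u => U_density Cb x c0 Cx u * forget_point size (G (u * x)) a) 0 1,
         p = (1 - c0 / Cx) * RiemannInt pr.

(* Main.v *)
Require Import Defs.
From Stdlib Require Import Reals List Lra Lia.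
Open Scope R_scope.

Lemma sum_le_lim (t : nat -> R) l : (forall k, 0 <= t k) -> infinite_sum t l ->
  forall N, sum_f_R0 t N <= l.
Proof.
  intros Ht Hl N. apply growing_ineq.
  - intro n. simpl. specialize (Ht (S n)). lra.
  - exact Hl.
Qed.

Lemma sum_ge0 (t : nat -> R) : (forall k, 0 <= t k) -> forall N, t 0%nat <= sum_f_R0 t N.
Proof.
  intros Ht N. induction N; simpl. lra. specialize (Ht (S N)). lra.
Qed.

Lemma sum_ge_two (t : nat -> R) : (forall k, 0 <= t k) -> forall m, (0 < m)%nat ->
  t 0%nat + t m <= sum_f_R0 t m.
Proof.
  intros Ht m Hm. destruct m. lia. simpl. pose proof (sum_ge0 t Ht m). lra.
Qed.

Lemma fold_const (Gy : nat -> R) v n : (forall i, (1 <= i <= n)%nat -> Gy i = v) ->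
  fold_right Rplus 0 (map Gy (seq 1 n)) = INR n * v.
Proof.
  intros H.
  assert (forall k s, (1 <= s)%nat -> (s + k <= n + 1)%nat ->
     fold_right Rplus 0 (map Gy (seq s k)) = INR k * v).
  { induction k; intros s Hs Hk; simpl. lra.
    rewrite IHk by lia. rewrite H by lia. destruct k; simpl; lra. }
  apply H0; lia.
Qed.

Lemma step_int (h : R -> R) : (forall u, 0 < u < 1 -> h u = 0) -> Riemann_integrable h 0 1.
Proof.
  intros Hh.
  assert (Hs : IsStepFun h 0 1).
  { exists (cons 0 (cons 1 nil)). exists (cons 0 nil).
    unfold adapted_couple. repeat split.
    - intros i Hi. simpl in Hi. destruct i; [simpl; lra | lia].
    - simpl. unfold Rmin. destruct (Rle_dec 0 1); lra.
    - simpl. unfold Rmax. destruct (Rle_dec 0 1); lra.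
    - intros i Hi. simpl in Hi. destruct i; [|lia]. simpl.
      intros y Hy. unfold open_interval in Hy. apply Hh; lra. }
  intro eps. exists (mkStepFun Hs). exists (mkStepFun (StepFun_P4 0 1 0)). split.
  - intros t _. simpl. unfold fct_cte. unfold Rminus. rewrite Rplus_opp_r, Rabs_R0. lra.
  - rewrite StepFun_P18. rewrite Rmult_0_l, Rabs_R0. apply cond_pos.
Qed.

Lemma poly_int K n (Hn : (0 < n)%nat) (pr : Riemann_integrable (fun u => K * (INR n * u ^ pred n)) 0 1) :
  RiemannInt pr = K.
Proof.
  pose (g := fun u => K * (INR n * u ^ pred n)). change (Riemann_integrable g 0 1) in pr.
  assert (Hlim : forall u, derivable_pt_lim (fun u => K * u ^ n) u (g u)).
  { intro u. apply (derivable_pt_lim_scal (fun y => y ^ n) K u). apply derivable_pt_lim_pow. }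
  assert (H01 : 0 <= 1) by lra.
  assert (H0 : forall u, 0 <= u <= 1 -> continuity_pt g u).
  { intros u _. unfold g. apply derivable_continuous_pt.
    apply derivable_pt_mult. apply derivable_pt_const.
    apply derivable_pt_mult. apply derivable_pt_const. 
    exists (INR (pred n) * u ^ pred (pred n)). apply derivable_pt_lim_pow. }

  change (@RiemannInt g 0 1 pr = K). rewrite (RiemannInt_P20 H01 (FTC_P1 H01 H0) pr).
  assert (H1 := RiemannInt_P29 H01 H0).
  assert (H2 : antiderivative g (fun u => K * u ^ n) 0 1).
  { split; [|lra]. intros u _. exists (exist _ (g u) (Hlim u)). reflexivity. }
  destruct (antiderivative_Ucte g _ _ _ _ H1 H2) as [C HC].
  rewrite (HC 1), (HC 0) by lra. simpl. rewrite pow1.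
  destruct n; [lia|]. simpl. ring.
Qed.

Theorem mainTheorem7 (A : Type) (size : A -> nat) (objs : nat -> list A)
  (Hclass : comb_class size objs)
  (Hnontriv : exists n, (0 < n)%nat /\ (0 < length (objs n))%nat)
  (rho : option R) (Hrad : is_radius (cnt objs) rho) (Hrho : radius_pos rho)
  (x : R) (Hx0 : 0 < x) (Hxrho : lt_radius x rho)
  (Cx : R) (HCx : infinite_sum (fun n => cnt objs n * x ^ n) Cx)
  (Cb : R -> R)
  (HCb : forall y, 0 < y <= x ->
         infinite_sum (fun n => INR n * cnt objs n * y ^ n) (Cb y))
  (G : R -> A -> nat -> R)
  (HG : forall y, 0 < y <= x -> pointed_boltzmann size (Cb y) y (G y)) :
  forall a : A, procedure_prob size objs Cx Cb G x a (x ^ size a / Cx).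
Proof.
  intro a. destruct Hnontriv as [m [Hm Hlm]].
  assert (Hcm : 0 < cnt objs m) by (unfold cnt; apply lt_0_INR; exact Hlm).
  assert (Hc0 : 0 <= cnt objs 0) by (unfold cnt; apply pos_INR).
  assert (HCxc : 0 < Cx - cnt objs 0).
  { assert (Hnn : forall k, 0 <= cnt objs k * x ^ k).
    { intro k. apply Rmult_le_pos. unfold cnt; apply pos_INR. apply pow_le; lra. }
    pose proof (sum_le_lim _ _ Hnn HCx m).
    pose proof (sum_ge_two _ Hnn m Hm). simpl in H0.
    assert (0 < cnt objs m * x ^ m) by (apply Rmult_lt_0_compat; [lra| apply pow_lt; lra]).
    lra. }
  assert (HCbp : forall y, 0 < y <= x -> 0 < Cb y).
  { intros y Hy.
    assert (Hnn : forall k, 0 <= INR k * cnt objs k * y ^ k).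
    { intro k. apply Rmult_le_pos. apply Rmult_le_pos. apply pos_INR.
      unfold cnt; apply pos_INR. apply pow_le; lra. }
    pose proof (sum_le_lim _ _ Hnn (HCb y Hy) m).
    pose proof (sum_ge_two _ Hnn m Hm). simpl in H0.
    assert (0 < INR m * cnt objs m * y ^ m).
    { apply Rmult_lt_0_compat; [apply Rmult_lt_0_compat; [apply lt_0_INR; exact Hm | lra]| apply pow_lt; lra]. }
    lra. }
  unfold procedure_prob. cbv zeta.
  destruct (Nat.eqb_spec (size a) 0) as [Hs|Hs].
  - assert (Hin : In a (objs 0%nat)) by (destruct Hclass as [_ Hc]; apply Hc; exact Hs).
    assert (Hc0p : 0 < cnt objs 0).
    { unfold cnt. apply lt_0_INR. destruct (objs 0%nat); simpl in *; [contradiction| lia]. }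
    rewrite Hs. simpl. field. split; lra.
  - set (n := size a) in *.
    set (K := x ^ n / (Cx - cnt objs 0)).
    set (f := fun u => U_density Cb x (cnt objs 0) Cx u * forget_point size (G (u * x)) a).
    set (g := fun u => K * (INR n * u ^ pred n)).
    assert (Hfg : forall u, 0 < u <= 1 -> f u = g u).
    { intros u Hu. assert (Hux : 0 < u * x <= x).
      { split. apply Rmult_lt_0_compat; lra.
        rewrite <- (Rmult_1_l x) at 2. apply Rmult_le_compat_r; lra. }
      unfold f, g, K, U_density, forget_point.
      rewrite (fold_const _ ((u * x) ^ n / Cb (u * x))).
      2:{ intros i Hi. rewrite (HG _ Hux). fold n.
          replace ((1 <=? i)%nat && (i <=? n)%nat)%bool with true. reflexivity.
          symmetry. apply andb_true_intro. split; apply Nat.leb_le; lia. }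
      rewrite (Rmult_comm x u). pose proof (HCbp _ Hux).
      assert (Hp : u ^ n = u * u ^ pred n).
      { unfold n. destruct (size a); [lia|]. reflexivity. }
      rewrite Rpow_mult_distr, Hp. change (size a) with n. field. repeat split; lra. }
    assert (Hgi : Riemann_integrable g 0 1).
    { apply continuity_implies_RiemannInt; [lra|]. intros u _. unfold g.
      apply derivable_continuous_pt.
      apply derivable_pt_mult. apply derivable_pt_const.
      apply derivable_pt_mult. apply derivable_pt_const.
      exists (INR (pred n) * u ^ pred (pred n)). apply derivable_pt_lim_pow. }
    assert (Hhi : Riemann_integrable (fun u => f u - g u) 0 1).
    { apply step_int. intros u Hu. rewrite Hfg by lra. ring. }
    assert (Hfi : Riemann_integrable f 0 1).
    { refine (@Riemann_integrable_ext (fun u => (f u - g u) + 1 * g u) f 0 1 _ _).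
      intros; ring. apply RiemannInt_P10; assumption. }
    exists Hfi.
    rewrite (RiemannInt_P18 Hfi Hgi) by (lra || (intros; apply Hfg; lra)).
    unfold g in Hgi. rewrite (poly_int K n) by lia.
    unfold K. field. split; lra.
Qed.
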